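(* Let $a\in\mathbb R^n$ with $a\geq 0$, $P\in\mathbb R^{n\times n}$ with $P\geq 0$, and $b:\mathbb R^n\times\mathbb R^n\to\mathbb R^n$ bilinear with $b(x,y)\geq0$ for all $x,y\geq 0$. Let $x_0\geq 0$ and $x_{k+1}=a+Px_k+b(x_k,x_k)$ for $k\geq 0$, and suppose the sequence $(x_k)$ is nondecreasing and converges to a limit $x_\ast$ with $x_\ast>x_0$ (strictly, in every component). Then $\rho\big(P+b(x_\ast,\cdot)+b(\cdot,x_\ast)\big)\leq 1$.
   Context: Inequalities between vectors/matrices are componentwise; $\rho$ denotes the spectral radius. For $x\in\mathbb R^n$, $b(x,\cdot)$ and $b(\cdot,x)$ denote the $n\times n$ matrices of the linear maps $y\mapsto b(x,y)$ and $y\mapsto b(y,x)$ respectively. The matrix $P+b(x,\cdot)+b(\cdot,x)$ is the Jacobian at $x$ of the map $x\mapsto a+Px+b(x,x)$. *)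

(* Defs.v *)
From Stdlib Require Import Reals Lra.
Open Scope R_scope.

(* Vectors of R^n are functions nat -> R (only indices i < n matter);
   n x n matrices are functions nat -> nat -> R. *)

Fixpoint sumR (n : nat) (f : nat -> R) : R :=
  match n with
  | O => 0
  | S m => sumR m f + f m
  end.

Definition mvmul (n : nat) (M : nat -> nat -> R) (v : nat -> R) : nat -> R :=
  fun i => sumR n (fun j => M i j * v j).

(* A bilinear map b : R^n x R^n -> R^n, given by its coefficient tensor B:
   b(x,y)_i = sum_{j,k<n} B i j k * x_j * y_k. Every bilinear map has this form. *)
Definition bil (n : nat) (B : nat -> nat -> nat -> R) (x y : nat -> R) : nat -> R :=
  fun i => sumR n (fun j => sumR n (fun k => B i j k * x j * y k)).

(* matrix of y |-> b(x,y) *)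
Definition bil_left_mx (n : nat) (B : nat -> nat -> nat -> R) (x : nat -> R)
  : nat -> nat -> R :=
  fun i k => sumR n (fun j => B i j k * x j).

(* matrix of y |-> b(y,x) *)
Definition bil_right_mx (n : nat) (B : nat -> nat -> nat -> R) (x : nat -> R)
  : nat -> nat -> R :=
  fun i j => sumR n (fun k => B i j k * x k).

Definition vle (n : nat) (x y : nat -> R) : Prop := forall i, (i < n)%nat -> x i <= y i.
Definition vlt (n : nat) (x y : nat -> R) : Prop := forall i, (i < n)%nat -> x i < y i.

(* (re + i*im) is a (complex) eigenvalue of the real n x n matrix M:
   there is a nonzero complex vector u + i w with M (u + i w) = (re + i im)(u + i w). *)
Definition is_eigenvalue (n : nat) (M : nat -> nat -> R) (re im : R) : Prop :=
  exists u w : nat -> R,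
    (exists i, (i < n)%nat /\ (u i <> 0 \/ w i <> 0)) /\
    (forall i, (i < n)%nat -> mvmul n M u i = re * u i - im * w i) /\
    (forall i, (i < n)%nat -> mvmul n M w i = im * u i + re * w i).

(* rho(M) <= r : every complex eigenvalue has modulus <= r
   (rho is the maximum modulus of the finitely many eigenvalues). *)
Definition spectral_radius_le (n : nat) (M : nat -> nat -> R) (r : R) : Prop :=
  forall re im, is_eigenvalue n M re im -> sqrt (re * re + im * im) <= r.

(* Main.v *)
Require Import Defs.
From Stdlib Require Import Reals Lra Lia Psatz.
Open Scope R_scope.

Lemma sumR_ext n f g : (forall i, (i < n)%nat -> f i = g i) -> sumR n f = sumR n g.
Proof. induction n; simpl; intros H; auto. rewrite IHn by (intros; apply H; lia). rewrite H by lia; auto. Qed.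

Lemma sumR_plus n f g : sumR n (fun i => f i + g i) = sumR n f + sumR n g.
Proof. induction n; simpl; [lra|]. rewrite IHn; lra. Qed.

Lemma sumR_scal n c f : sumR n (fun i => c * f i) = c * sumR n f.
Proof. induction n; simpl; [lra|]. rewrite IHn; lra. Qed.

Lemma sumR_scal_r n c f : sumR n (fun i => f i * c) = sumR n f * c.
Proof. induction n; simpl; [lra|]. rewrite IHn; lra. Qed.

Lemma sumR_le n f g : (forall i, (i < n)%nat -> f i <= g i) -> sumR n f <= sumR n g.
Proof. induction n; simpl; intros H; [lra|]. assert (H1 := H n ltac:(lia)).
 assert (sumR n f <= sumR n g) by (apply IHn; intros; apply H; lia). lra. Qed.

Lemma sumR_nonneg n f : (forall i, (i < n)%nat -> 0 <= f i) -> 0 <= sumR n f.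
Proof. intros H. replace 0 with (sumR n (fun _ => 0)). apply sumR_le; auto.
 clear H; induction n; simpl; auto; rewrite IHn; lra. Qed.

Lemma sumR_zero n f : (forall i, (i < n)%nat -> 0 <= f i) -> sumR n f = 0 ->
  forall i, (i < n)%nat -> f i = 0.
Proof. induction n; simpl; intros H Hs i Hi; [lia|].
 assert (0 <= sumR n f) by (apply sumR_nonneg; intros; apply H; lia).
 assert (0 <= f n) by (apply H; lia).
 destruct (Nat.eq_dec i n). subst; lra.
 apply IHn; try lia; try lra. intros; apply H; lia. Qed.

Lemma sumR_swap n m (F : nat -> nat -> R) :
  sumR n (fun i => sumR m (fun j => F i j)) = sumR m (fun j => sumR n (fun i => F i j)).
Proof. induction n; simpl. { induction m; simpl; auto. rewrite <- IHm; lra. }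
 rewrite IHn. rewrite <- sumR_plus. reflexivity. Qed.

Lemma sumR_delta n j (c : nat -> R) : (j < n)%nat ->
  sumR n (fun m => if Nat.eqb m j then c m else 0) = c j.
Proof. induction n; simpl; intros H; [lia|].
 destruct (Nat.eq_dec j n).
 - subst. rewrite Nat.eqb_refl.
   rewrite (sumR_ext n _ (fun _ => 0)). 2:{ intros i Hi. destruct (Nat.eqb_spec i n); [lia|auto]. }
   clear; induction n; simpl; try lra.
 - rewrite IHn by lia. destruct (Nat.eqb_spec n j); [lia|lra]. Qed.

Lemma sumR_cv n (f : nat -> nat -> R) (l : nat -> R) :
  (forall j, (j < n)%nat -> Un_cv (fun k => f k j) (l j)) ->
  Un_cv (fun k => sumR n (f k)) (sumR n l).
Proof. induction n; simpl; intros H.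
 - intros e He; exists O; intros; unfold Rdist; rewrite Rminus_diag, Rabs_R0; lra.
 - apply CV_plus. apply IHn; intros; apply H; lia. apply H; lia. Qed.

Lemma sumR0 n : sumR n (fun _ => 0) = 0.
Proof. induction n; simpl; auto. rewrite IHn; lra. Qed.

Lemma B_nonneg n B : (forall y z, vle n (fun _ => 0) y -> vle n (fun _ => 0) z ->
          vle n (fun _ => 0) (bil n B y z)) ->
  forall i j k, (i < n)%nat -> (j < n)%nat -> (k < n)%nat -> 0 <= B i j k.
Proof. intros hb i j k Hi Hj Hk.
 set (e := fun j m => if Nat.eqb m j then 1 else 0).
 assert (He : forall j, vle n (fun _ => 0) (e j)).
 { intros j' m _. unfold e. destruct (Nat.eqb m j'); lra. }
 specialize (hb (e j) (e k) (He j) (He k) i Hi). unfold bil in hb.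
 rewrite (sumR_ext n _ (fun j' => if Nat.eqb j' j then B i j' k else 0)) in hb.
 - rewrite sumR_delta in hb; auto.
 - intros j' Hj'. rewrite (sumR_ext n _ (fun k' => if Nat.eqb k' k then B i j' k' * e j j' else 0)).
   + rewrite sumR_delta by auto. unfold e. destruct (Nat.eqb j' j); lra.
   + intros k' _. unfold e at 2. destruct (Nat.eqb k' k); lra.
Qed.

Lemma triangle2 a b c d : sqrt ((a+c)*(a+c)+(b+d)*(b+d)) <= sqrt (a*a+b*b) + sqrt (c*c+d*d).
Proof.
 assert (H1 : 0 <= a*a+b*b) by nra. assert (H2 : 0 <= c*c+d*d) by nra.
 assert (Hs1 := sqrt_pos (a*a+b*b)). assert (Hs2 := sqrt_pos (c*c+d*d)).
 assert (Hcs : a*c+b*d <= sqrt (a*a+b*b) * sqrt (c*c+d*d)).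
 { rewrite <- sqrt_mult by auto.
   destruct (Rle_dec (a*c+b*d) 0). { assert (Hq := sqrt_pos ((a*a+b*b)*(c*c+d*d))). lra. }
   apply Rnot_le_lt in n.
   rewrite <- (sqrt_square (a*c+b*d)) by lra. apply sqrt_le_1_alt. assert (0 <= (a*d-b*c)*(a*d-b*c)) by apply Rle_0_sqr. nra. }
 rewrite <- (sqrt_square (sqrt (a*a+b*b) + sqrt (c*c+d*d))) by lra.
 apply sqrt_le_1_alt.
 assert (E1 := sqrt_sqrt _ H1). assert (E2 := sqrt_sqrt _ H2). nra.
Qed.

Lemma triangle_sum n f g : sqrt (sumR n f * sumR n f + sumR n g * sumR n g) <=
  sumR n (fun j => sqrt (f j * f j + g j * g j)).
Proof. induction n; simpl.
 - rewrite Rmult_0_l, Rplus_0_l, sqrt_0; lra.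
 - eapply Rle_trans. apply triangle2. lra. Qed.

Lemma eig_sub n (M : nat -> nat -> R) re im u w :
  (forall i j, (i < n)%nat -> (j < n)%nat -> 0 <= M i j) ->
  (forall i, (i < n)%nat -> mvmul n M u i = re * u i - im * w i) ->
  (forall i, (i < n)%nat -> mvmul n M w i = im * u i + re * w i) ->
  forall i, (i < n)%nat ->
  sqrt (re*re+im*im) * sqrt (u i * u i + w i * w i) <=
  mvmul n M (fun j => sqrt (u j * u j + w j * w j)) i.
Proof. intros HM Hu Hw i Hi.
 rewrite <- sqrt_mult by nra.
 replace ((re*re+im*im)*(u i*u i+w i*w i)) with
   (mvmul n M u i * mvmul n M u i + mvmul n M w i * mvmul n M w i)
   by (rewrite Hu, Hw by auto; ring).
 unfold mvmul. eapply Rle_trans. apply triangle_sum.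
 apply Req_le, sumR_ext. intros j Hj.
 replace (M i j * u j * (M i j * u j) + M i j * w j * (M i j * w j)) with
  ((M i j)*(M i j) * (u j * u j + w j * w j)) by ring.
 rewrite sqrt_mult by nra. rewrite sqrt_square; auto.
Qed.

Lemma finite_choice n (Q : nat -> R -> Prop) :
  (forall i, (i < n)%nat -> exists ti, 0 < ti /\ forall t, 0 < t <= ti -> Q i t) ->
  exists t0, 0 < t0 /\ forall t, 0 < t <= t0 -> forall i, (i < n)%nat -> Q i t.
Proof. induction n; intros H.
 - exists 1; split; [lra|]; intros; lia.
 - destruct IHn as [t1 [Ht1 H1]]. intros; apply H; lia.
   destruct (H n ltac:(lia)) as [t2 [Ht2 H2]].
   exists (Rmin t1 t2). split. apply Rmin_glb_lt; auto.
   intros t Ht i Hi. assert (Rmin t1 t2 <= t1) by apply Rmin_l.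
   assert (Rmin t1 t2 <= t2) by apply Rmin_r.
   destruct (Nat.eq_dec i n). subst; apply H2; lra. apply H1; [lra|lia].
Qed.

Lemma Jz_eq n P B xs z i :
  mvmul n (fun i j => P i j + bil_left_mx n B xs i j + bil_right_mx n B xs i j) z i =
  mvmul n P z i + bil n B xs z i + bil n B z xs i.
Proof. unfold mvmul, bil, bil_left_mx, bil_right_mx.
 rewrite (sumR_ext n _ (fun j => (P i j * z j + sumR n (fun l => B i l j * xs l) * z j)
     + sumR n (fun k => B i j k * xs k) * z j)) by (intros; ring).
 rewrite !sumR_plus. f_equal. f_equal.
 - rewrite (sumR_ext n _ (fun k => sumR n (fun j => B i j k * xs j * z k))).
   apply sumR_swap. intros; rewrite <- sumR_scal_r; auto.
 - apply sumR_ext; intros; rewrite <- sumR_scal_r; apply sumR_ext; intros; ring.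
Qed.

Lemma sumR_comb n f g h c d : sumR n (fun i => f i + c * g i + d * h i) =
  sumR n f + c * sumR n g + d * sumR n h.
Proof. rewrite !sumR_plus, !sumR_scal. auto. Qed.

Lemma f_shift n a P B xs z t i :
  a i + mvmul n P (fun j => xs j - t * z j) i + bil n B (fun j => xs j - t * z j) (fun j => xs j - t * z j) i
  = (a i + mvmul n P xs i + bil n B xs xs i) - t * (mvmul n P z i + bil n B xs z i + bil n B z xs i)
    + t * t * bil n B z z i.
Proof.
 assert (E1 : mvmul n P (fun j => xs j - t * z j) i = mvmul n P xs i + (-t) * mvmul n P z i + 0 * mvmul n P z i).
 { unfold mvmul. rewrite <- sumR_comb. apply sumR_ext; intros; ring. }
 assert (E2 : bil n B (fun j => xs j - t * z j) (fun j => xs j - t * z j) i =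
   bil n B xs xs i + (-t) * (bil n B xs z i + bil n B z xs i) + (t*t) * bil n B z z i).
 { unfold bil. rewrite <- sumR_plus. rewrite <- sumR_comb. apply sumR_ext; intros j _.
   rewrite <- sumR_plus. rewrite <- sumR_comb. apply sumR_ext; intros; ring. }
 rewrite E1, E2. ring.
Qed.

Lemma cv_S (u : nat -> R) l : Un_cv u l -> Un_cv (fun k => u (S k)) l.
Proof. intros H e He. destruct (H e He) as [N HN]. exists N. intros k Hk. apply HN. lia. Qed.

Theorem mainTheorem6 (n : nat) (a : nat -> R) (P : nat -> nat -> R)
  (B : nat -> nat -> nat -> R) (x : nat -> nat -> R) (xstar : nat -> R)
  (ha : forall i, (i < n)%nat -> 0 <= a i)
  (hP : forall i j, (i < n)%nat -> (j < n)%nat -> 0 <= P i j)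
  (hb : forall y z, vle n (fun _ => 0) y -> vle n (fun _ => 0) z ->
          vle n (fun _ => 0) (bil n B y z))
  (hx0 : vle n (fun _ => 0) (x O))
  (hrec : forall k i, (i < n)%nat ->
          x (S k) i = a i + mvmul n P (x k) i + bil n B (x k) (x k) i)
  (hmono : forall k, vle n (x k) (x (S k)))
  (hlim : forall i, (i < n)%nat -> Un_cv (fun k => x k i) (xstar i))
  (hpos : vlt n (x O) xstar) :
  spectral_radius_le n
    (fun i j => P i j + bil_left_mx n B xstar i j + bil_right_mx n B xstar i j) 1.
Proof.
 intros re im [u [w [[i0 [Hi0 Hnz]] [Hu Hw]]]].
 destruct (Rle_dec (sqrt (re * re + im * im)) 1) as [|Hgt]; auto. exfalso.
 apply Rnot_le_lt in Hgt. set (r := sqrt (re * re + im * im)) in *.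
 assert (HB := B_nonneg n B hb).
 assert (Hxs0 : forall k i, (i < n)%nat -> x O i <= x k i).
 { induction k; intros i Hi. lra. specialize (hmono k i Hi). specialize (IHk i Hi). lra. }
 assert (Hxle : forall k i, (i < n)%nat -> x k i <= xstar i).
 { intros k i Hi. apply (growing_ineq (fun k => x k i)); auto. intros m; apply hmono; auto. }
 assert (Hxspos : forall i, (i < n)%nat -> 0 < xstar i).
 { intros i Hi. specialize (hpos i Hi). specialize (hx0 i Hi). simpl in hx0. lra. }
 assert (Hfix : forall i, (i < n)%nat -> xstar i = a i + mvmul n P xstar i + bil n B xstar xstar i).
 { intros i Hi. apply (UL_sequence (fun k => x (S k) i)). apply (cv_S (fun k => x k i)), hlim; auto.
   apply (Un_cv_ext (fun k => a i + mvmul n P (x k) i + bil n B (x k) (x k) i)).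
   intros k; rewrite hrec; auto.
   apply CV_plus. apply CV_plus. intros e He; exists O; intros; unfold Rdist; rewrite Rminus_diag, Rabs_R0; lra.
   unfold mvmul. apply sumR_cv. intros j Hj. apply CV_mult.
   intros e He; exists O; intros; unfold Rdist; rewrite Rminus_diag, Rabs_R0; lra. apply hlim; auto.
   unfold bil. apply sumR_cv. intros j Hj. apply sumR_cv. intros l Hl.
   apply CV_mult. apply CV_mult.
   intros e He; exists O; intros; unfold Rdist; rewrite Rminus_diag, Rabs_R0; lra. apply hlim; auto. apply hlim; auto. }
 set (M := fun i j => P i j + bil_left_mx n B xstar i j + bil_right_mx n B xstar i j) in *.
 assert (HM : forall i j, (i < n)%nat -> (j < n)%nat -> 0 <= M i j).
 { intros i j Hi Hj. unfold M, bil_left_mx, bil_right_mx.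
   assert (0 <= P i j) by auto.
   assert (0 <= sumR n (fun l => B i l j * xstar l)).
   { apply sumR_nonneg; intros. apply Rmult_le_pos; auto. apply Rlt_le; auto. }
   assert (0 <= sumR n (fun k => B i j k * xstar k)).
   { apply sumR_nonneg; intros. apply Rmult_le_pos; auto. apply Rlt_le; auto. }
   lra. }
 set (z := fun j => sqrt (u j * u j + w j * w j)).
 assert (Hz : forall i, (i < n)%nat -> r * z i <= mvmul n M z i).
 { intros i Hi. apply eig_sub with (re:=re) (im:=im); auto. }
 assert (Hz0 : forall j, 0 <= z j) by (intros; apply sqrt_pos).
 assert (Hzi0 : 0 < z i0).
 { apply sqrt_lt_R0. destruct Hnz as [H|H]; [assert (0 < u i0 * u i0) by (apply Rsqr_pos_lt; auto) | assert (0 < w i0 * w i0) by (apply Rsqr_pos_lt; auto)]; nra. }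
 assert (HJz : forall i, mvmul n M z i = mvmul n P z i + bil n B xstar z i + bil n B z xstar i)
   by (intros; unfold M; apply Jz_eq).
 assert (Hbnn : forall y v i, (i < n)%nat -> (forall j, (j < n)%nat -> 0 <= y j) ->
    (forall j, (j < n)%nat -> 0 <= v j) -> 0 <= bil n B y v i).
 { intros y v i Hi Hy Hv. unfold bil. apply sumR_nonneg; intros j Hj; apply sumR_nonneg; intros k Hk.
   apply Rmult_le_pos; [apply Rmult_le_pos|]; auto. }
 assert (Hpnn : forall y i, (i < n)%nat -> (forall j, (j < n)%nat -> 0 <= y j) -> 0 <= mvmul n P y i).
 { intros y i Hi Hy. unfold mvmul. apply sumR_nonneg; intros j Hj. apply Rmult_le_pos; auto. }
 assert (Hxsnn : forall j, (j < n)%nat -> 0 <= xstar j) by (intros; apply Rlt_le; auto).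
 assert (Hdich : forall i, (i < n)%nat -> 0 < mvmul n M z i - z i \/ bil n B z z i = 0).
 { intros i Hi. destruct (Rlt_dec 0 (z i)) as [Hzp|Hzp].
   - left. specialize (Hz i Hi). nra.
   - assert (Hzi : z i = 0) by (specialize (Hz0 i); lra).
     destruct (Rlt_dec 0 (mvmul n M z i)) as [Hp|Hp]. left; lra. right.
     assert (E : bil n B z xstar i = 0).
     { specialize (Hz i Hi). rewrite HJz in Hz, Hp.
       assert (0 <= mvmul n P z i) by (apply Hpnn; auto).
       assert (0 <= bil n B xstar z i) by (apply Hbnn; auto).
       assert (0 <= bil n B z xstar i) by (apply Hbnn; auto). nra. }
     unfold bil in E |- *.
     rewrite <- (sumR0 n). apply sumR_ext. intros j Hj.
     rewrite <- (sumR0 n). apply sumR_ext. intros k Hk.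
     assert (E1 : sumR n (fun k => B i j k * z j * xstar k) = 0).
     { apply (sumR_zero n (fun j => sumR n (fun k => B i j k * z j * xstar k))); auto.
       intros j' Hj'; apply sumR_nonneg; intros k' Hk'; apply Rmult_le_pos; [apply Rmult_le_pos|]; auto. }
     assert (E2 : B i j k * z j * xstar k = 0).
     { apply (sumR_zero n (fun k => B i j k * z j * xstar k)); auto.
       intros k' Hk'; apply Rmult_le_pos; [apply Rmult_le_pos|]; auto. }
     assert (Hk' := Hxspos k Hk).
     assert (E3 : B i j k * z j = 0).
     { apply Rmult_integral in E2. destruct E2; auto. lra. }
     rewrite E3; ring. }
 destruct (finite_choice n (fun i t => t * z i <= xstar i - x O i /\
      t * bil n B z z i <= mvmul n M z i - z i)) as [t0 [Ht0 Ht]].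
 { intros i Hi. specialize (hpos i Hi). assert (Hzi := Hz0 i).
   assert (Hg : 0 <= mvmul n M z i - z i).
   { specialize (Hz i Hi). assert (r * z i >= z i) by nra. lra. }
   assert (Hbb : 0 <= bil n B z z i) by (apply Hbnn; auto).
   set (t1 := (xstar i - x O i) / (z i + 1)).
   assert (Ht1 : 0 < t1) by (unfold t1; apply Rdiv_lt_0_compat; lra).
   assert (Ht1' : t1 * (z i + 1) = xstar i - x O i) by (unfold t1; field; lra).
   destruct (Hdich i Hi) as [Hgp|Hb0].
   - destruct (Rlt_dec 0 (bil n B z z i)) as [Hbp|Hbp].
     + exists (Rmin t1 ((mvmul n M z i - z i) / bil n B z z i)). split.
       apply Rmin_glb_lt; auto. apply Rdiv_lt_0_compat; auto.
       intros t [Htp Htl]. assert (Hm1 := Rmin_l t1 ((mvmul n M z i - z i) / bil n B z z i)).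
       assert (Hm2 := Rmin_r t1 ((mvmul n M z i - z i) / bil n B z z i)).
       split. nra.
       assert (t <= (mvmul n M z i - z i) / bil n B z z i) by lra.
       apply Rmult_le_compat_r with (r := bil n B z z i) in H; [|lra].
       unfold Rdiv in H. rewrite Rmult_assoc, Rinv_l, Rmult_1_r in H; lra.
     + exists t1. split; auto. intros t [Htp Htl]. split. nra.
       assert (bil n B z z i = 0) by lra. rewrite H. lra.
   - exists t1. split; auto. intros t [Htp Htl]. split. nra. rewrite Hb0. lra. }
 set (t := t0) in *.
 assert (Hy : forall k i, (i < n)%nat -> x k i <= xstar i - t * z i).
 { induction k; intros i Hi.
   - destruct (Ht t ltac:(lra) i Hi); lra.
   - rewrite hrec by auto.
     assert (Hyn : forall j, (j < n)%nat -> 0 <= x k j) by (intros j Hj; specialize (hx0 j Hj); specialize (Hxs0 k j Hj); simpl in hx0; lra).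
     apply Rle_trans with (a i + mvmul n P (fun j => xstar j - t * z j) i +
        bil n B (fun j => xstar j - t * z j) (fun j => xstar j - t * z j) i).
     + apply Rplus_le_compat. apply Rplus_le_compat_l.
       unfold mvmul; apply sumR_le; intros j Hj; apply Rmult_le_compat_l; auto.
       unfold bil; apply sumR_le; intros j Hj; apply sumR_le; intros l Hl.
       apply Rmult_le_compat. apply Rmult_le_pos; auto. auto.
       apply Rmult_le_compat_l; auto. apply IHk; auto.
     + rewrite f_shift. rewrite <- Hfix by auto. rewrite <- HJz.
       destruct (Ht t ltac:(lra) i Hi) as [_ H2]. nra. }
 assert (Hlim0 : xstar i0 <= xstar i0 - t * z i0).
 { apply (Rle_cv_lim (Un := fun k => x k i0) (Vn := fun _ => xstar i0 - t * z i0)).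
   intros; apply Hy; auto. apply hlim; auto.
   intros e He; exists O; intros; unfold Rdist; rewrite Rminus_diag, Rabs_R0; lra. }
 assert (0 < t * z i0) by (apply Rmult_lt_0_compat; auto). lra.
Qed.
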